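(* Let $g\ge1$ be an integer and let $\mathcal S\subseteq\mathbb N$ be a $\mathcal D[g]$ set. Then, as $n\to\infty$, $$|\mathcal S(n)|\ \le\ \log_2 n+\frac12\log_2\log_2 n+\log_2 g-\log_2\left(\sqrt{\frac2\pi}\right)+o(1),$$ where $\mathcal S(n):=\mathcal S\cap[1,n]$.
   Context: For a positive integer $g$, a set $\mathcal S=\{a_1<a_2<\cdots\}\subset\mathbb N$ is a $\mathcal D[g]$ set if for every $m$ (for which $a_m$ exists) and every $t\in\mathbb Z$, $$\left|\left\{I\subseteq\{1,\dots,m\}:\ \sum_{i\in I}a_i=t\right\}\right|\le g.$$ *)

(* Defs.v *)
From mathcomp Require Import all_boot.
From Stdlib Require Import Reals.

Set Implicit Arguments.
Unset Strict Implicit.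
Unset Printing Implicit Defensive.

Definition prefix_set (S : pred nat) (n : nat) : {set 'I_n.+1} :=
  [set i : 'I_n.+1 | S i].

Definition Sn (S : pred nat) (n : nat) : {set 'I_n.+1} :=
  [set i : 'I_n.+1 | (0 < i)%N && S i].

Definition nreps (n : nat) (A : {set 'I_n.+1}) (t : nat) : nat :=
  #|[set I : {set 'I_n.+1} | (I \subset A) && ((\sum_(i in I) (i : nat))%N == t)]|.

(* D[g] sets: every initial segment {a_1,...,a_m} of S (these are exactly the
   sets S ∩ [0,n], n ∈ ℕ) has at most g subsets with any prescribed sum t.
   Sums are nonnegative, so t ranging over ℕ is the same as over ℤ. *)
Definition D_set (g : nat) (S : pred nat) : Prop :=
  forall n t : nat, (nreps (prefix_set S n) t <= g)%N.

Definition log2 (x : R) : R := (ln x / ln 2)%R.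

(* Main.v *)
From Stdlib Require Import Reals Lra Lia.
From mathcomp Require Import ssreflect ssrfun ssrbool.
From Coquelicot Require Coquelicot.

Module Wallis.
Import Coquelicot.Coquelicot.
Open Scope R_scope.

Definition I (n : nat) : R := RInt (fun x => sin x ^ n) 0 (PI/2).

Lemma cont_pow n x : continuous (fun x => sin x ^ n) x.
Proof. apply: ex_derive_continuous; auto_derive; auto. Qed.

Lemma ex_I n : ex_RInt (fun x => sin x ^ n) 0 (PI/2).
Proof. apply: ex_RInt_continuous => z _; exact: cont_pow. Qed.

Lemma PI2_pos : 0 < PI/2.
Proof. generalize PI_RGT_0; lra. Qed.

Lemma I_rec n : INR (n+2) * I (n+2) = INR (n+1) * I n.
Proof.
have h := @is_RInt_derive R_CompleteNormedModule (fun x => - (sin x ^ (n+1) * cos x))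
  (fun x => INR (n+2) * sin x ^ (n+2) - INR (n+1) * sin x ^ n) 0 (PI/2).
have H : is_RInt (fun x => INR (n+2) * sin x ^ (n+2) - INR (n+1) * sin x ^ n) 0 (PI/2)
   (minus (- (sin (PI/2) ^ (n+1) * cos (PI/2))) (- (sin 0 ^ (n+1) * cos 0))).
  apply: h => x _.
    auto_derive; first by [].
    rewrite !plus_INR /=. 
    have e' : 1 - cos x * cos x - sin x * sin x = 0 by have := sin2_cos2 x; unfold Rsqr; lra.
    transitivity ((INR n + 1) * sin x ^ n * (1 - cos x * cos x - sin x * sin x) +
       ((INR n + (1+1)) * sin x ^ (n + 2) - (INR n + 1) * sin x ^ n)).
      replace (Init.Nat.pred (n + 1)) with n by (rewrite Nat.add_1_r; reflexivity).
      rewrite !pow_add /=; ring.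
    rewrite e'; ring.
  apply: ex_derive_continuous; auto_derive; auto.
set F := (fun x : R => INR (n + 2) * sin x ^ (n + 2) - INR (n + 1) * sin x ^ n).
have H2 : is_RInt F 0 (PI/2) (INR (n+2) * I (n+2) - INR (n+1) * I n).
  apply: (is_RInt_minus (V := R_CompleteNormedModule)); apply: is_RInt_scal; apply: RInt_correct; exact: ex_I.
have e1 := is_RInt_unique _ _ _ _ H.
have e2 := is_RInt_unique _ _ _ _ H2.
rewrite e1 in e2.
rewrite cos_PI2 sin_0 pow_i in e2; last by rewrite Nat.add_1_r; apply: Nat.lt_0_succ.
move: e2; rewrite /minus /plus /opp /=. 
move=> e; ring_simplify in e; lra.
Qed.

Lemma I_nonneg n : 0 <= I n.
Proof.
rewrite /I; have e : RInt (fun _ => 0) 0 (PI/2) = 0.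
  by rewrite RInt_const /scal /= /mult /=; ring.
apply: Rle_trans (Req_le _ _ (esym e)) _.
apply: RInt_le; first by generalize PI2_pos; lra.
- apply: ex_RInt_continuous => z _; apply: continuous_const.
- exact: ex_I.
move=> x hx; apply: pow_le; apply: sin_ge_0; generalize PI_RGT_0; lra.
Qed.

Lemma I_mono n : I (S n) <= I n.
Proof.
apply: RInt_le; first by generalize PI2_pos; lra.
- exact: ex_I.
- exact: ex_I.
move=> x hx; rewrite /= .
have s0 : 0 <= sin x by apply: sin_ge_0; generalize PI_RGT_0; lra.
have s1 : sin x <= 1 by have := SIN_bound x; lra.
have := pow_le _ n s0; nra.
Qed.

Lemma I0 : I 0 = PI/2.
Proof. by rewrite /I /= RInt_const /scal /= /mult /=; ring. Qed.

Lemma I1 : I 1 = 1.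
Proof.
have h := @is_RInt_derive R_CompleteNormedModule (fun x => - cos x) (fun x => sin x ^ 1) 0 (PI/2).
rewrite /I (is_RInt_unique _ _ _ _ (h _ _)).
- by rewrite cos_PI2 cos_0 /minus /plus /opp /=; ring.
- move=> x _; auto_derive; auto; ring.
- move=> x _; exact: cont_pow.
Qed.


Lemma I_prod n : INR (n+1) * I n * I (S n) = PI/2.
Proof.
elim: n => [|n IH]; first by rewrite I0 I1 /=; field.
have r := I_rec n.
replace (S n + 1)%nat with (n+2)%nat by lia.
replace (S (S n)) with (n+2)%nat by lia.
replace (S n) with (n+1)%nat in IH by lia.
replace (S n) with (n+1)%nat by lia.
transitivity (I (n+1) * (INR (n + 2) * I (n + 2))); first ring.
rewrite r -IH; ring.
Qed.

Lemma I_even (b : nat -> R) : b 0%nat = 1 ->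
  (forall m, b (S m) * INR (m+1) = 2 * INR (2*m+1) * b m) ->
  forall m, I (2*m) = PI/2 * b m / 4^m.
Proof.
move=> b0 hb; elim => [|m IH]; first by rewrite /= I0 b0; field.
have r := I_rec (2*m).
replace (2 * S m)%nat with (2*m+2)%nat by lia.
have hm : 0 < INR (m+1) by apply: lt_0_INR; lia.
have hb' : b (S m) = 2 * INR (2*m+1) * b m / INR (m+1).
  by rewrite -hb; field; lra.
have h2 : INR (2*m+2) = 2 * INR (m+1) by rewrite (_ : 2 = INR 2) // -mult_INR; f_equal; lia.
have h1 : INR (2*m+1) = 2 * INR m + 1 by rewrite (_ : 2 = INR 2) // -mult_INR -S_INR; f_equal; lia.
rewrite h2 in r.
have ->: I (2*m+2) = INR (2*m+1) * I (2*m) / (2 * INR (m+1)) by rewrite -r; field; lra.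
rewrite IH hb' /=; field; split; [lra | apply: pow_nonzero; lra].
Qed.

Lemma wallis (b : nat -> R) : b 0%nat = 1 ->
  (forall m, b (S m) * INR (m+1) = 2 * INR (2*m+1) * b m) ->
  forall m, 2 * 16^m <= b m ^ 2 * PI * INR (2*m+1).
Proof.
move=> b0 hb m.
have e := I_even b b0 hb m.
have p := I_prod (2*m).
have mo := I_mono (2*m).
have nn := I_nonneg (S (2*m)).
have pi := PI_RGT_0.
have hm : 0 < INR (2*m+1) by apply: lt_0_INR; lia.
have q : PI / 2 <= INR (2*m+1) * I (2*m) ^ 2.
  rewrite -p; have := I_nonneg (2*m) => i0.
  have : 0 <= INR (2*m+1) * I (2*m) by apply: Rmult_le_pos; lra.
  move=> hp; have h := Rmult_le_compat_l _ _ _ hp mo.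
  rewrite (_ : I (2*m) ^ 2 = I (2*m) * I (2*m)); [lra | ring].
rewrite e in q.
have h4 : 0 < 4 ^ m by apply: pow_lt; lra.
have e16 : 16 ^ m = 4^m * 4^m by rewrite -Rpow_mult_distr; f_equal; ring.
rewrite e16.
have : PI / 2 * (4^m * 4^m) <= INR (2*m+1) * (PI/2 * b m)^2.
  have -> : INR (2*m+1) * (PI/2 * b m)^2 = INR (2 * m + 1) * (PI / 2 * b m / 4 ^ m) ^ 2 * (4^m * 4^m).
    by field; lra.
  apply: Rmult_le_compat_r; [nra | exact: q].
move=> h; nra.
Qed.
End Wallis.

Module RealAux.
Open Scope R_scope.

Lemma ln_le' x y : 0 < x -> x <= y -> ln x <= ln y.
Proof.
move=> hx hxy; case: (Rle_lt_or_eq_dec _ _ hxy) => h.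
  by apply: Rlt_le; apply: ln_increasing.
by rewrite h; lra.
Qed.

Lemma ln_sub1 z : 0 < z -> ln z <= z - 1.
Proof.
move=> hz; case: (Req_dec (z - 1) 0) => h.
  have -> : z = 1 by lra.
  by rewrite ln_1; lra.
have := exp_ineq1 _ h => e.
have := ln_increasing _ _ hz (_ : z < exp (z - 1)); rewrite ln_exp => H.
by apply: Rlt_le; apply: H; lra.
Qed.

Lemma ln_sqrt' x : 0 < x -> ln (sqrt x) = ln x / 2.
Proof.
move=> hx; have hs : 0 < sqrt x by apply: sqrt_lt_R0.
have e : ln x = ln (sqrt x * sqrt x) by rewrite sqrt_sqrt //; lra.
rewrite e ln_mult //; lra.
Qed.

Lemma main_real (eps C0 : R) : 0 < eps -> exists U : R, 0 < U /\
  forall k u : R, 0 <= k -> U <= u -> k * ln 2 - ln (k + 2) / 2 <= u + C0 ->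
  ln (k + 2) <= 2 * eps * ln 2 + ln u - ln (ln 2).
Proof.
move=> heps.
set a := ln 2.
have ha : / 2 < a by exact: ln_lt_2.
set Q := exp (2 * eps * a).
have hQ : 1 + 2 * eps * a < Q by apply: exp_ineq1; nra.
set d := Q - 1.
have hd : 0 < d by rewrite /d; nra.
set C2 := C0 + 2 * a + eps * a - ln a / 2 + (- 1 - ln d) / 2.
exists (Rmax (2 * a) (2 * C2 / d)); split.
  apply: Rlt_le_trans (Rmax_l _ _); lra.
move=> k u hk hu hh.
have hu1 : 2 * a <= u by apply: Rle_trans (Rmax_l _ _) hu.
have hu2 : 2 * C2 / d <= u by apply: Rle_trans (Rmax_r _ _) hu.
have upos : 0 < u by lra.
have apos : 0 < a by lra.
have hQpos : 0 < Q by rewrite /Q; apply: exp_pos.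
suff key : (k + 2) * a <= Q * u.
  have hka : 0 < (k + 2) * a by nra.
  have := ln_le' _ _ hka key; rewrite !ln_mult //; try lra.
  by rewrite /Q ln_exp; lra.
apply: Rnot_lt_le => hlt.
set y := Q * u / a - 2.
have ey : y + 2 = Q * u * / a by rewrite /y; field; lra.
have hy : 0 <= y.
  have : 2 * a <= Q * u by nra.
  move=> h; rewrite /y; apply: Rle_trans (_ : 0 <= (Q * u - 2 * a) / a) _.
    by apply: Rmult_le_pos; [lra | apply: Rlt_le; apply: Rinv_0_lt_compat].
  by right; field; lra.
have hky : y < k.
  have : Q * u / a < k + 2.
    apply: (Rmult_lt_reg_r a) => //; rewrite /Rdiv Rmult_assoc Rinv_l; lra.
  rewrite /y; lra.
set w := (k + 2) * / (y + 2).
have hy2 : 0 < y + 2 by lra.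
have ew : w * (y + 2) = k + 2 by rewrite /w; field; lra.
have hw : 0 < w by rewrite /w; apply: Rmult_lt_0_compat; [lra | apply: Rinv_0_lt_compat].
have lw : ln w = ln (k + 2) - ln (y + 2) by rewrite /w ln_mult ?ln_Rinv //; try lra; apply: Rinv_0_lt_compat.
have lw1 := ln_sub1 _ hw.
have hw2 : w - 1 <= (k - y) / 2.
  have : (w - 1) * (y + 2) = k - y by nra.
  move=> h; have : 0 <= w - 1 by nra.
  move=> h'; have : (w - 1) * 2 <= (w - 1) * (y + 2) by nra.
  lra.
have lny : ln (y + 2) = 2 * eps * a + ln u - ln a.
  have qu : 0 < Q * u by nra.
  have ia : 0 < / a by apply: Rinv_0_lt_compat.
  rewrite ey (ln_mult _ _ qu ia) (ln_mult _ _ hQpos upos) (ln_Rinv _ apos) /Q ln_exp; ring.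
have lnu : ln u <= d * u - 1 - ln d.
  have := ln_sub1 (d * u) (Rmult_lt_0_compat _ _ hd upos); rewrite ln_mult //; lra.
have hC : 2 * C2 <= d * u.
  have := Rmult_le_compat_r d _ _ (Rlt_le _ _ hd) hu2.
  by rewrite /Rdiv Rmult_assoc Rinv_l; lra.
have eQ : Q = d + 1 by rewrite /d; ring.
rewrite /C2 in hC.
have : (k - y) * a - (k - y) / 4 > 0 by nra.
have ya : y * a = Q * u - 2 * a by rewrite /y; field; lra.
have Qu : Q * u = d * u + u by rewrite eQ; ring.
lra.
Qed.
End RealAux.

Require Import Defs.
From mathcomp Require Import all_boot all_order all_algebra zify.
Import GRing.Theory Num.Theory Order.TTheory.

Set Implicit Arguments.
Unset Strict Implicit.
Unset Printing Implicit Defensive.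

Fixpoint B (k j : nat) : nat :=
  match k with
  | 0 => (0 < j)%N
  | k'.+1 => match j with 0 => 0 | j'.+1 => B k' j'.+2 + B k' j' end
  end.

Lemma B0 k : B k 0 = 0. Proof. by case: k. Qed.

Section Comb.
Variable n : nat.
Notation T := 'I_n.+1.

Definition ssum (I : {set T}) : nat := \sum_(i in I) (i : nat).

Definition win (A I : {set T}) (lo hi : int) : bool :=
  (lo < 2 * (ssum I)%:Z - (ssum A)%:Z)%R && (2 * (ssum I)%:Z - (ssum A)%:Z <= hi)%R.

Definition Cs (A : {set T}) (lo hi : int) : nat :=
  #|[set I : {set T} | (I \subset A) && win A I lo hi]|.

Lemma Cs_mono (A : {set T}) (lo hi lo' hi' : int) :
  (lo <= lo')%R -> (hi' <= hi)%R -> Cs A lo' hi' <= Cs A lo hi.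
Proof.
move=> h1 h2; apply: subset_leq_card; apply/subsetP => I; rewrite !inE.
case/andP => -> /andP[h3 h4] /=; apply/andP; split; lia.
Qed.

Lemma Cs_UI (A : {set T}) (lo1 hi1 lo2 hi2 : int) :
  (lo1 <= lo2)%R -> (hi1 <= hi2)%R -> (lo2 <= hi1)%R ->
  Cs A lo1 hi1 + Cs A lo2 hi2 = Cs A lo1 hi2 + Cs A lo2 hi1.
Proof.
move=> h1 h2 h3; rewrite /Cs -cardUI; congr (_ + _); apply: eq_card => I;
rewrite !inE /win; set v := (2 * _ - _)%R; case: (I \subset A) => //=;
case: (ltrP lo1 v); case: (ltrP lo2 v); case: (lerP v hi1); case: (lerP v hi2) => /= *;
  first [done | exfalso; lia].
Qed.

Lemma ssumU1 (a : T) (J : {set T}) : a \notin J -> ssum (a |: J) = a + ssum J.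
Proof. by move=> aJ; rewrite /ssum big_setU1. Qed.

Lemma ssumD1 (a : T) (A : {set T}) : a \in A -> ssum A = a + ssum (A :\ a).
Proof. by move=> aA; rewrite /ssum (big_setD1 a aA). Qed.

Lemma Cs_split (A : {set T}) (a : T) (lo hi : int) : a \in A ->
  Cs A lo hi = Cs (A :\ a) (lo - (a:nat)%:Z) (hi - (a:nat)%:Z)
             + Cs (A :\ a) (lo + (a:nat)%:Z) (hi + (a:nat)%:Z).
Proof.
move=> aA; set A' := A :\ a.
have sA : ssum A = a + ssum A' by exact: ssumD1.
set P1 := [set I : {set T} | (I \subset A') && win A' I (lo + (a:nat)%:Z) (hi + (a:nat)%:Z)].
set Q := [set J : {set T} | (J \subset A') && win A' J (lo - (a:nat)%:Z) (hi - (a:nat)%:Z)].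
set P2 := [set a |: J | J in Q].
have aA' : a \notin A' by rewrite !inE eqxx.
have cP2 : #|P2| = #|Q|.
  apply: card_in_imset => J1 J2; rewrite !inE => /andP[s1 _] /andP[s2 _] e.
  have n1 : a \notin J1 by apply: contra aA'; apply: (subsetP s1).
  have n2 : a \notin J2 by apply: contra aA'; apply: (subsetP s2).
  by rewrite -(setU1K n1) -(setU1K n2) e.
have dis : P1 :&: P2 = set0.
  apply/setP => I; rewrite !inE; apply/negbTE; apply/negP => /andP[/andP[s _] /imsetP[J _ eI]].
  by move/subsetP: s => /(_ a); rewrite eI !inE eqxx /= => /(_ isT).
have sub2 : forall I : {set T}, a \in I -> (I \subset A) = (I :\ a \subset A').
  move=> I aI; apply/idP/idP => h.
    by apply/subsetP => i; rewrite !inE => /andP[-> /(subsetP h)].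
  apply/subsetP => i iI; case: (eqVneq i a) => [->//|ia].
  by move/subsetP: h => /(_ i); rewrite !inE ia iI => /(_ isT) /andP[].
have eP : [set I : {set T} | (I \subset A) && win A I lo hi] = P1 :|: P2.
  apply/setP => I; rewrite !inE; case aI: (a \in I).
  - have -> : (I \subset A') = false.
      apply/negbTE/negP => /subsetP /(_ a aI); by rewrite (negbTE aA').
    have -> : (I \in P2) = (I :\ a \in Q).
      apply/idP/idP.
        case/imsetP => J JQ eI; have : a \notin J.
          by move: JQ; rewrite inE => /andP[/subsetP sJ _]; apply: contra aA'; apply: sJ.
        by move=> aJ; rewrite eI setU1K.
      by move=> h; apply/imsetP; exists (I :\ a) => //; rewrite setD1K.
    rewrite inE sub2 //; case: (I :\ a \subset A') => //=.
    have sI : ssum I = a + ssum (I :\ a) by exact: ssumD1.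
    rewrite /win sI sA; apply/idP/idP => /andP[h1 h2]; apply/andP; split; lia.
  - have -> : (I \in P2) = false.
      apply/negbTE/negP => /imsetP[J _ eI]; by rewrite eI !inE eqxx in aI.
    rewrite orbF /A' subsetD1 aI andbT; case: (I \subset A) => //=.
    rewrite -/A' /win sA; apply/idP/idP => /andP[h1 h2]; apply/andP; split; lia.
rewrite /Cs eP -/Q -cP2 addnC; apply/eqP; rewrite -(eqn_add2r #|P1 :&: P2|) cardsUI dis cards0 addn0.
by rewrite addnC.
Qed.

Lemma mbin k : forall (A : {set T}) (M x : int) (j : nat), #|A| = k ->
  (forall i : T, i \in A -> (0 < i)%N /\ ((i:nat)%:Z <= M)%R) ->
  (0 < j)%N -> (- M <= x)%R -> (x < M)%R ->
  B k j <= Cs A (x - j%:Z * M) (x + j%:Z * M).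
Proof.
elim: k => [|k IH] A M x j cA hA j0 hx1 hx2.
  move/cards0_eq: cA => ->; rewrite /= j0 /Cs card_gt0; apply/set0Pn; exists set0.
  rewrite inE sub0set /win /ssum big_set0 /=.
  have hj : (M <= j%:Z * M)%R by nia.
  apply/andP; split; lia.
have : (0 < #|A|)%N by rewrite cA.
case/card_gt0P => i0 i0A.
have : exists2 b : T, b \in A & forall i : T, i \in A -> (i:nat) <= b.
  by case: (arg_maxnP (fun i : T => (i:nat)) i0A) => c1 c2 c3; exists c1.
case=> b bA bmax.
case: j j0 => [//|j'] _.
set A' := A :\ b.
have cA' : #|A'| = k by move: cA; rewrite (cardsD1 b A) bA add1n => -[].
have [a0 aM] := hA b bA.
set bi := Posz (b:nat).
have hA' : forall i : T, i \in A' -> (0 < i)%N /\ ((i:nat)%:Z <= bi)%R.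
  move=> i; rewrite !inE => /andP[_ iA]; have [i0' _] := hA i iA; split => //.
  by rewrite /bi lez_nat; apply: bmax.
have bi0 : (0 < bi)%R by rewrite /bi ltz_nat.
have biM : (bi <= M)%R := aM.
rewrite (Cs_split _ _ bA) -/A'.
rewrite Cs_UI; last first.
- rewrite /bi; nia.
- lia.
- lia.
have hK : (M - bi <= (j'%:Z + 1) * (M - bi))%R by nia.
pose y := (if (x < - bi) then - bi else if (bi <= x) then bi - 1 else x)%R.
have [hy1 hy2 hy3 hy4] : [/\ (- bi <= y)%R, (y < bi)%R, (x - (j'%:Z + 1) * (M - bi) <= y)%R
   & (y <= x + (j'%:Z + 1) * (M - bi))%R].
  rewrite /y; case: (ltrP x (-bi)) => h1; [|case: (lerP bi x) => h2]; split; lia.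
have e1 : (j'.+1%:Z = j'%:Z + 1)%R by lia.
have e2 : (j'.+2%:Z = j'%:Z + 2)%R by lia.
rewrite /=; apply: leq_add.
  apply: leq_trans (IH A' bi y j'.+2 cA' hA' isT hy1 hy2) _.
  apply: Cs_mono; rewrite e1 e2; nia.
case: j' e1 e2 hy3 hy4 hK => [|j'] e1 e2 hy3 hy4 hK; first by rewrite B0.
apply: leq_trans (IH A' bi y j'.+1 cA' hA' isT hy1 hy2) _.
apply: Cs_mono; rewrite e1; nia.
Qed.
End Comb.

Lemma pascal_sum k (f : nat -> nat) :
  \sum_(t < k.+2) 'C(k.+1, t) * f t = \sum_(t < k.+1) 'C(k, t) * (f t + f t.+1).
Proof.
have e1 : \sum_(t < k.+1) 'C(k, t) * f t = f 0 + \sum_(t < k.+1) 'C(k, t.+1) * f t.+1.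
  rewrite big_ord_recl bin0 mul1n; congr (_ + _).
  rewrite [in RHS]big_ord_recr /= bin_small // mul0n addn0.
  by apply: eq_bigr => i _.
rewrite big_ord_recl bin0 mul1n.
under eq_bigr => i _ do rewrite /bump /= binS mulnDl.
under [in RHS]eq_bigr => i _ do rewrite mulnDr.
by rewrite !big_split /= e1 addnA.
Qed.

Lemma BE k j : B k j = \sum_(t < k.+1) 'C(k, t) * ((2*t < k + j) && (k <= 2*t + j)).
Proof.
elim: k j => [|k IH] j.
  by rewrite big_ord1 bin0 mul1n; case: j.
case: j => [|j].
  rewrite B0; symmetry; apply/eqP; rewrite sum_nat_eq0; apply/forallP => t; apply/implyP => _.
  by rewrite muln_eq0 eqb0; apply/orP; right; apply/negP => /andP[h1 h2]; lia.
rewrite /= IH IH (pascal_sum k (fun t => nat_of_bool ((2*t < k.+1 + j.+1) && (k.+1 <= 2*t + j.+1)))) -big_split /=; apply: eq_bigr => t _.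
rewrite -mulnDr; congr (_ * _).
case: (ltnP (2*t) (k + j.+2)); case: (leqP k (2*t + j.+2)); case: (ltnP (2*t) (k+j));
  case: (leqP k (2*t+j)); case: (ltnP (2*t.+1) (k.+1 + j.+1)); case: (leqP k.+1 (2*t.+1 + j.+1));
  case: (ltnP (2*t) (k.+1 + j.+1)); case: (leqP k.+1 (2*t + j.+1)) => /= *; lia.
Qed.

Lemma B1 k : 'C(k, k./2) <= B k 1.
Proof.
rewrite BE.
have h : k./2 < k.+1 by rewrite ltnS; apply: leq_trans (leq_half _) _ ; [] || lia.
rewrite (bigD1 (Ordinal h)) //= ; apply: leq_trans (leq_addr _ _).
have -> : (2 * k./2 < k + 1) && (k <= 2 * k./2 + 1).
  apply/andP; split; have := odd_double_half k; case: (odd k) => /=; lia.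
by rewrite muln1.
Qed.

Lemma count_window m c d : (c <= d)%N ->
  \sum_(t < m) nat_of_bool ((c <= t) && (t < d))%N = minn m d - minn m c.
Proof.
move=> cd; elim: m => [|m IH]; first by rewrite big_ord0 !min0n.
rewrite big_ord_recr /= IH.
case: (leqP c m); case: (ltnP m d) => /= *; lia.
Qed.

Lemma count_par m a n :
  (\sum_(t < m) nat_of_bool ((a <= 2 * t) && (2 * t < a + 2 * n)) <= n)%N.
Proof.
have -> : \sum_(t < m) nat_of_bool ((a <= 2 * t) && (2 * t < a + 2 * n)) =
   \sum_(t < m) nat_of_bool ((a.+1 %/ 2 <= t) && (t < a.+1 %/ 2 + n)).
  apply: eq_bigr => t _; congr (nat_of_bool _).
  case: (leqP a (2*t)); case: (ltnP (2*t) (a + 2*n)); case: (leqP (a.+1 %/ 2) t);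
   case: (ltnP t (a.+1 %/ 2 + n)) => /= *; lia.
rewrite count_window; first lia.
lia.
Qed.

Lemma ssum_sub n (I A : {set 'I_n.+1}) : I \subset A -> (ssum I <= ssum A)%N.
Proof.
move=> sIA; rewrite /ssum [X in (X <= _)%N]big_mkcond [X in (_ <= X)%N]big_mkcond /=.
apply: leq_sum => i _; case iI: (i \in I) => //; by rewrite (subsetP sIA i iI).
Qed.

Lemma prefix_Sn S n : ~~ S 0 -> prefix_set S n = Sn S n.
Proof.
move=> S0; apply/setP => -[[|m] h]; rewrite !inE //=.
by rewrite (negbTE S0).
Qed.

Lemma Cs_upper g S n (lo hi : int) : ~~ S 0 -> D_set g S ->
  (- (n%:Z) <= lo)%R -> (hi <= n%:Z)%R -> (Cs (Sn S n) lo hi <= g * n)%N.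
Proof.
move=> S0 Dg hlo hhi.
set A := Sn S n; set K := ssum A.
rewrite /Cs -sum1dep_card (partition_big (fun I => inord (ssum I) : 'I_K.+1) predT) //=.
pose cnd (t : nat) := nat_of_bool ((K.+1 - n <= 2 * t) && (2 * t < K.+1 - n + 2 * n))%N.
apply: (@leq_trans (\sum_(t < K.+1) g * cnd t)).
  apply: leq_sum => t _.
  case c: (cnd t == 0).
    rewrite big_pred0 // => I; apply/negbTE/negP => /andP[/andP[sI w] /eqP et].
    have sK : (ssum I <= K)%N by apply: ssum_sub.
    have et' : ssum I = t by rewrite -et inordK // ltnS.
    move: c w; rewrite /cnd /win -et' -/K => c /andP[h1 h2]; move: c.
    case: (leqP (K.+1 - n) (2 * ssum I)); case: (ltnP (2 * ssum I) (K.+1 - n + 2 * n)) => /= *;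
      first [done | lia].
  have -> : cnd t = 1%N by move: c; rewrite /cnd; case: (_ && _).
  rewrite muln1 sum1dep_card; apply: leq_trans (Dg n t).
  rewrite /nreps prefix_Sn //; apply: subset_leq_card; apply/subsetP => I; rewrite !inE.
  case/andP => /andP[sI _] /eqP et; rewrite sI /=.
  have sK : (ssum I <= K)%N by apply: ssum_sub.
  have et' : ssum I = t by rewrite -et inordK // ltnS.
  by rewrite -et'.
rewrite -big_distrr /=; rewrite leq_mul2l; apply/orP; right.
exact: count_par.
Qed.

Lemma comb_bound g S n : (0 < n)%N -> ~~ S 0 -> D_set g S ->
  ('C(#|Sn S n|, #|Sn S n|./2) <= g * n)%N.
Proof.
move=> n0 S0 Dg.
apply: leq_trans (B1 _) _.
have h := @mbin n #|Sn S n| (Sn S n) (n%:Z) 0%R 1 erefl.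
apply: leq_trans (h _ isT _ _) _.
- move=> i; rewrite inE => /andP[i0 _]; split => //; rewrite lez_nat; exact: (ltn_ord i).
- lia.
- lia.
apply: Cs_upper => //; lia.
Qed.


Delimit Scope R_scope with R.
Open Scope R_scope.

Lemma binE m : ('C((m.+1).*2, m.+1) = 2 * 'C(m.*2.+1, m))%N.
Proof.
have e2 : 'C(m.*2.+1, m.+1) = 'C(m.*2.+1, m).
  by rewrite -bin_sub; [congr 'C(_, _); lia | lia].
by rewrite doubleS binS e2; lia.
Qed.

Lemma binE2 m : ('C((m.+1).*2, m.+1) * m.+1 = 2 * m.*2.+1 * 'C(m.*2, m))%N.
Proof.
have e1 := mul_bin_diag (m.*2.+1) m.
have e2 : 'C(m.*2.+1, m.+1) = 'C(m.*2.+1, m).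
  by rewrite -bin_sub; [congr 'C(_, _); lia | lia].
by rewrite binE -e2 -mulnA [X in (2 * X)%N]mulnC -e1 /= mulnA.
Qed.

Lemma wallis_C m : 2 * 16 ^ m <= INR 'C(m.*2, m) ^ 2 * PI * INR (m.*2.+1).
Proof.
have E : forall m, ((2 * m)%coq_nat + 1)%coq_nat = m.*2.+1 by move=> ?; rewrite -muln2; lia.
have h := @Wallis.wallis (fun m => INR 'C(m.*2, m)) _ _ m.
rewrite E in h; apply: h; first by rewrite double0 bin0.
move=> k; rewrite E (_ : (k + 1)%coq_nat = k.+1); last lia.
rewrite -mult_INR multE binE2 -!multE !mult_INR (_ : INR 2 = 2) //; simpl; ring.
Qed.

Lemma central_lb k : 2 * 4 ^ k <= INR 'C(k, k./2) ^ 2 * PI * INR (k.+2).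
Proof.
have pi := PI_RGT_0.
have := odd_double_half k; case: (odd k) => ek.
  have h := wallis_C (k./2).+1.
  have ek' : (k./2).*2.+1 = k by rewrite -[in RHS]ek.
  have e1 : 'C((k./2).+1.*2, (k./2).+1) = (2 * 'C(k, k./2))%N by rewrite binE ek'.
  have e2 : (k./2).+1.*2.+1 = k.+2 by rewrite doubleS ek'.
  rewrite e1 e2 mult_INR in h.
  have e3 : 16 ^ (k./2).+1 = 4 * 4 ^ k.
    rewrite -[in RHS]ek'; move: (k./2) => j.
    rewrite -muln2 -multE /= pow_mult (_ : 16 = 4 * 4); last ring.
    rewrite Rpow_mult_distr /=; ring.
  rewrite e3 in h; rewrite (_ : INR 2 = 2) // in h.
  have ex : (2 * INR 'C(k, k./2)) ^ 2 * PI * INR k.+2 = 4 * (INR 'C(k, k./2) ^ 2 * PI * INR k.+2) by ring.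
  lra.
have h := wallis_C (k./2).
have ek' : (k./2).*2 = k by rewrite -[in RHS]ek.
have e3 : 16 ^ (k./2) = 4 ^ k.
  rewrite -[in RHS]ek'; move: (k./2) => j.
  rewrite -muln2 -multE pow_mult (_ : 16 = 4 * 4); last ring.
  rewrite Rpow_mult_distr /=; ring.
rewrite e3 ek' in h.
have hle : INR k.+1 <= INR k.+2 by apply: le_INR; lia.
have hC : 0 <= INR 'C(k, k./2) ^ 2 * PI by apply: Rmult_le_pos; [apply: pow2_ge_0 | lra].
have := Rmult_le_compat_l _ _ _ hC hle; lra.
Qed.


Lemma corollary2_R (g : nat) (S : pred nat) :
  (1 <= g)%N -> ~~ S 0%N -> D_set g S ->
  forall eps : R, (0 < eps)%R ->
  exists N : nat, forall n : nat, (N <= n)%N ->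
    (INR #|Sn S n| <=
       log2 (INR n) + / 2 * log2 (log2 (INR n)) + log2 (INR g)
       - log2 (sqrt (2 / PI)) + eps)%R.
Proof.
move=> g1 S0 Dg eps heps.
set a := ln 2.
have ha : / 2 < a by exact: ln_lt_2.
have apos : 0 < a by lra.
have gpos : 0 < INR g by apply: lt_0_INR; lia.
have pi := PI_RGT_0.
set C0 := ln (INR g) + (ln PI - a) / 2.
have [U [U0 HU]] := RealAux.main_real eps C0 heps.
have [N0 hN0] := INR_unbounded (exp U).
exists N0.+1 => n hn.
have n1 : (0 < n)%N by lia.
have hnN : INR N0 <= INR n by apply: le_INR; lia.
have npos : 0 < INR n by apply: lt_0_INR; lia.
set u := ln (INR n).
have hu : U <= u.
  rewrite -(ln_exp U); apply: RealAux.ln_le'; [exact: exp_pos | lra].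
have upos : 0 < u by lra.
set K := #|Sn S n|.
have cb := comb_bound n1 S0 Dg.
have cbR : INR 'C(K, K./2) <= INR g * INR n.
  rewrite -mult_INR; apply: le_INR; rewrite /K; move: cb; nia.
have cl := central_lb K.
have C0le : 0 <= INR 'C(K, K./2) by apply: pos_INR.
have Kpos : 0 <= INR K by apply: pos_INR.
have eK : INR K.+2 = INR K + 2 by rewrite !S_INR; ring.
rewrite eK in cl.
have h2 : 2 * 4 ^ K <= (INR g * INR n) ^ 2 * PI * (INR K + 2).
  apply: Rle_trans cl _.
  apply: Rmult_le_compat_r; first lra.
  apply: Rmult_le_compat_r; first lra.
  by apply: pow_incr; split.
have h4 : 0 < 4 ^ K by apply: pow_lt; lra.
have hl := RealAux.ln_le' _ _ (Rmult_lt_0_compat _ _ (Rlt_0_2) h4) h2.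
have l4 : ln 4 = 2 * a by rewrite /a (_ : 4 = 2 * 2); [rewrite ln_mult; lra | ring].
have gn : 0 < INR g * INR n by apply: Rmult_lt_0_compat.
have L1 : ln (2 * 4 ^ K) = a + INR K * (2 * a).
  by rewrite ln_mult ?ln_pow ?l4 //; lra.
have p1 : 0 < (INR g * INR n) ^ 2 by apply: pow_lt.
have p2 : 0 < (INR g * INR n) ^ 2 * PI by apply: Rmult_lt_0_compat.
have p3 : 0 < INR K + 2 by lra.
have L2 : ln ((INR g * INR n) ^ 2 * PI * (INR K + 2)) = 2 * (ln (INR g) + u) + ln PI + ln (INR K + 2).
  rewrite (ln_mult _ _ p2 p3) (ln_mult _ _ p1 pi) (ln_pow _ gn) (ln_mult _ _ gpos npos) /u.
  by rewrite (_ : INR 2 = 2) //; ring.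
rewrite L1 L2 in hl.
have hK : INR K * a - ln (INR K + 2) / 2 <= u + C0 by rewrite /C0; lra.
have hk := HU (INR K) u Kpos hu hK.
have lq : ln (u / a) = ln u - ln a.
  have ia : 0 < / a by apply: Rinv_0_lt_compat.
  by rewrite /Rdiv (ln_mult _ _ upos ia) (ln_Rinv _ apos); ring.
have ls : ln (sqrt (2 / PI)) = (a - ln PI) / 2.
  rewrite RealAux.ln_sqrt'; last by apply: Rdiv_lt_0_compat; lra.
  have ip : 0 < / PI by apply: Rinv_0_lt_compat.
  rewrite /Rdiv (ln_mult _ _ Rlt_0_2 ip) (ln_Rinv _ pi) -/a; field.
rewrite /log2 -/a -/u lq ls.
apply: (Rmult_le_reg_r a) => //.
have -> : (u / a + / 2 * ((ln u - ln a) / a) + ln (INR g) / a - (a - ln PI) / 2 / a + eps) * a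
  = u + (ln u - ln a) / 2 + ln (INR g) - (a - ln PI) / 2 + eps * a by field; lra.
rewrite /C0 in hK; rewrite -/a in hk; lra.
Qed.

Close Scope R_scope.

Theorem corollary2 (g : nat) (S : pred nat) :
  (1 <= g)%N -> ~~ S 0 -> D_set g S ->
  forall eps : R, (0 < eps)%R ->
  exists N : nat, forall n : nat, (N <= n)%N ->
    (INR #|Sn S n| <=
       log2 (INR n) + / 2 * log2 (log2 (INR n)) + log2 (INR g)
       - log2 (sqrt (2 / PI)) + eps)%R.
Proof. exact: corollary2_R. Qed.
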